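(* Let $\Psi$ be a universal resource. Then $E_s(\Psi)=\infty$.
   Context: For an $N$-qubit $|\psi\rangle$ and an $n$-qubit $|\phi\rangle$, $n\le N$, write $|\psi\rangle\geq_{\mathrm{LOCC}}|\phi\rangle$ if for some set $A$ of $n$ qubits the transformation $|\psi\rangle\to|\phi\rangle^A|0\rangle^{\bar A}$ is achievable exactly and with probability one by LOCC (each qubit a separate party). A resource is an infinite family $\Psi$ of multi-qubit pure states; it is universal if for every $n$ and every $n$-qubit $|\phi\rangle$ some $|\psi\rangle\in\Psi$ has $|\psi\rangle\geq_{\mathrm{LOCC}}|\phi\rangle$. The Schmidt measure $E_s(|\psi\rangle)$ of an $N$-qubit state is $\log_2K$, where $K$ is the minimal number of $N$-qubit product states $|\alpha_1\rangle,\dots,|\alpha_K\rangle$ such that $|\psi\rangle=\sum_{i=1}^Ka_i|\alpha_i\rangle$ for some complex $a_i$; $E_s(\Psi):=\sup_{|\psi\rangle\in\Psi}E_s(|\psi\rangle)$. *)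

(* Defs.v *)
From HB Require Import structures.
From mathcomp Require Import all_boot all_order all_algebra.
From mathcomp Require Import all_classical all_reals all_analysis.
From mathcomp.real_closed Require Import complex.

Set Implicit Arguments.
Unset Strict Implicit.
Unset Printing Implicit Defensive.

Import Order.TTheory GRing.Theory Num.Theory.
Local Open Scope ring_scope.
Local Open Scope classical_set_scope.

Section QubitDefs.
Variable R : realType.
Local Notation C := (R[i]).

Definition bits (N : nat) := {ffun 'I_N -> 'I_2}.

(* A (not necessarily normalised) vector of (C^2)^{\otimes N}, given by its
   coordinates in the computational basis. *)
Definition qvec (N : nat) := bits N -> C.

Definition is_pure (N : nat) (psi : qvec N) : Prop :=
  \sum_(x : bits N) psi x * (psi x)^* = 1.

Definition apply_local (N : nat) (k : 'I_N) (M : 'M[C]_2) (psi : qvec N)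
  : qvec N :=
  fun x => \sum_(b : 'I_2) M (x k) b * psi (finfun (fun j => if j == k then b else x j)).

Definition kraus_family (m : nat) (M : 'I_m -> 'M[C]_2) : Prop :=
  forall a b : 'I_2,
    \sum_(j < m) \sum_(c : 'I_2) ((M j c a)^* * M j c b) = (a == b)%:R.

Definition proportional (N : nat) (psi phi : qvec N) : Prop :=
  exists c : C, c != 0 /\ forall x, psi x = c * phi x.

(* Exact, probability-one LOCC transformation psi -> phi among the N
   qubits, each qubit being a separate party: a finite-round protocol in
   which, at each round, one party performs a local measurement (finitely
   many Kraus operators, chosen depending on all previous outcomes), and
   every outcome of nonzero probability must eventually lead to phi. *)
Inductive locc (N : nat) : qvec N -> qvec N -> Prop :=
| locc_done psi phi : proportional psi phi -> locc psi phi
| locc_meas psi phi (k : 'I_N) (m : nat) (M : 'I_m -> 'M[C]_2) :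
    kraus_family M ->
    (forall j : 'I_m, apply_local k (M j) psi <> (fun _ => 0) ->
       locc (apply_local k (M j) psi) phi) ->
    locc psi phi.

(* |phi>^A |0>^{complement of A}, A being the image of the injection f. *)
Definition embed (n N : nat) (f : 'I_n -> 'I_N) (phi : qvec n) : qvec N :=
  fun x => if [forall k, (k \notin codom f) ==> (x k == ord0)]
           then phi (finfun (fun i => x (f i))) else 0.

Definition locc_geq (N n : nat) (psi : qvec N) (phi : qvec n) : Prop :=
  (n <= N)%N /\
  exists f : 'I_n -> 'I_N, injective f /\ locc psi (embed f phi).

Definition mqstate := {N : nat & qvec N}.

Definition is_resource (Psi : set mqstate) : Prop :=
  infinite_set Psi /\ forall s, Psi s -> is_pure (projT2 s).

Definition universal (Psi : set mqstate) : Prop :=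
  forall (n : nat) (phi : qvec n), is_pure phi ->
    exists s, Psi s /\ locc_geq (projT2 s) phi.

Definition sum_of_products (N : nat) (psi : qvec N) (K : nat) : Prop :=
  exists (a : 'I_K -> C) (v : 'I_K -> 'I_N -> 'I_2 -> C),
    forall x : bits N, psi x = \sum_(i < K) a i * \prod_(k < N) v i k (x k).

Definition log2 (x : R) : R := ln x / ln 2.

Definition schmidt_measure (N : nat) (psi : qvec N) : R :=
  inf [set log2 K%:R | K in sum_of_products psi].

(* E_s(Psi) = +oo, i.e. sup_{psi in Psi} E_s(psi) is unbounded. *)
Definition schmidt_measure_infinite (Psi : set mqstate) : Prop :=
  forall r : R, exists s, Psi s /\ r < schmidt_measure (projT2 s).

End QubitDefs.

(* Main.v *)
Require Import Defs.
From mathcomp Require Import all_boot all_order all_algebra.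
From mathcomp Require Import all_classical all_reals all_analysis.
From mathcomp.real_closed Require Import complex.
Import Order.TTheory GRing.Theory Num.Theory.
Set Implicit Arguments.
Unset Strict Implicit.
Unset Printing Implicit Defensive.
Local Open Scope ring_scope.

Section Helpers.
Variable R : realType.
Local Notation C := (R[i]).

Definition upd N (x : bits N) (k : 'I_N) (b : 'I_2) : bits N :=
  finfun (fun j => if j == k then b else x j).

Lemma updK N (x : bits N) k : upd x k (x k) = x.
Proof. by apply/ffunP => j; rewrite ffunE; case: eqP => // ->. Qed.

Lemma upd_at N (x : bits N) k b : upd x k b k = b.
Proof. by rewrite ffunE eqxx. Qed.

Lemma updI N (x : bits N) k b c : upd (upd x k c) k b = upd x k b.
Proof. by apply/ffunP => j; rewrite !ffunE; case: eqP. Qed.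

Lemma sum_delta (F : 'I_2 -> C) a : \sum_(b : 'I_2) (a == b)%:R * F b = F a.
Proof.
rewrite (bigD1 a) //= eqxx mul1r big1 ?addr0 // => b.
by rewrite eq_sym => /negbTE ->; rewrite mul0r.
Qed.

Lemma kraus_nz N (k : 'I_N) m (M : 'I_m -> 'M[C]_2) (psi : qvec R N) :
  kraus_family M -> psi <> (fun _ => 0) ->
  exists j, apply_local k (M j) psi <> (fun _ => 0).
Proof.
move=> HK Hpsi; apply/not_existsP => H0; apply: Hpsi.
have H j : apply_local k (M j) psi = (fun _ => 0).
  by have := H0 j; apply: contra_notP.
apply/funext => x; rewrite -(updK x k).
move: (x k) => a.
rewrite -(sum_delta (fun b => psi (upd x k b)) a).
transitivity (\sum_(b : 'I_2) (\sum_(j < m) \sum_(c : 'I_2) ((M j c a)^* * M j c b)) * psi (upd x k b)).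
  by apply: eq_bigr => b _; rewrite HK.
transitivity (\sum_(b : 'I_2) \sum_(j < m) \sum_(c : 'I_2) ((M j c a)^* * M j c b * psi (upd x k b))).
  apply: eq_bigr => b _; rewrite big_distrl; apply: eq_bigr => j _.
  by rewrite big_distrl.
rewrite exchange_big.
transitivity (\sum_(j < m) \sum_(c : 'I_2) (M j c a)^* * apply_local k (M j) psi (upd x k c)).
  apply: eq_bigr => j _; rewrite exchange_big; apply: eq_bigr => c _.
  rewrite /apply_local big_distrr; apply: eq_bigr => b _.
  have -> : finfun (fun j0 => if j0 == k then b else upd x k c j0) = upd x k b.
    by apply/ffunP => l; rewrite !ffunE; case: eqP.
  by rewrite upd_at /= mulrA.
by rewrite big1 // => j _; rewrite big1 // => c _; rewrite H mulr0.
Qed.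

Lemma sop_local N (k : 'I_N) (M : 'M[C]_2) (psi : qvec R N) K :
  sum_of_products psi K -> sum_of_products (apply_local k M psi) K.
Proof.
case=> a [v Hv].
exists a, (fun i l c => if l == k then \sum_(b : 'I_2) M c b * v i k b else v i l c).
move=> x; rewrite /apply_local.
transitivity (\sum_(b : 'I_2) \sum_(i < K) M (x k) b * (a i * (v i k b *
   \prod_(l < N | l != k) v i l (x l)))).
  apply: eq_bigr => b _; rewrite Hv big_distrr; apply: eq_bigr => i _ /=.
  rewrite (bigD1 k) //= ffunE eqxx; congr (_ * (_ * (_ * _))).
  by apply: eq_bigr => l /negbTE Hl; rewrite ffunE Hl.
rewrite exchange_big; apply: eq_bigr => i _.
rewrite [in RHS](bigD1 k) //= eqxx.
rewrite [X in _ = _ * (_ * X)](eq_bigr (fun l => v i l (x l))); last first.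
  by move=> l /negbTE ->.
rewrite mulrA mulrC big_distrr /= big_distrr /=; apply: eq_bigr => b _.
by rewrite mulrA [RHS]mulrC -!mulrA mulrCA.
Qed.

Lemma sop_scale N (psi : qvec R N) c K :
  sum_of_products psi K -> sum_of_products (fun x => c * psi x) K.
Proof.
case=> a [v Hv]; exists (fun i => c * a i), v => x.
by rewrite Hv big_distrr; apply: eq_bigr => i _ /=; rewrite mulrA.
Qed.

Lemma locc_sop N (psi phi : qvec R N) : locc psi phi ->
  psi <> (fun _ => 0) -> forall K, sum_of_products psi K -> sum_of_products phi K.
Proof.
elim=> {psi phi}.
  move=> psi phi [c [Hc Hp]] _ K HK.
  have -> : phi = (fun x => c^-1 * psi x).
    by apply/funext => x; rewrite Hp mulrA mulVf // mul1r.
  exact: sop_scale.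
move=> psi phi k m M HK _ IH Hpsi K HS.
have [j Hj] := kraus_nz k HK Hpsi.
by apply: (IH j Hj Hj); apply: sop_local.
Qed.

Lemma sop_embed n N (f : 'I_n -> 'I_N) (phi : qvec R n) K :
  injective f -> sum_of_products (embed f phi) K -> sum_of_products phi K.
Proof.
move=> finj [a [v Hv]].
pose xy (y : bits n) : bits N :=
  finfun (fun k => if [pick j | f j == k] is Some j then y j else ord0).
exists (fun i => a i * \prod_(k < N | k \notin codom f) v i k ord0),
  (fun i j b => v i (f j) b).
move=> y.
have Hxy1 : forall k, k \notin codom f -> xy y k = ord0.
  move=> k Hk; rewrite ffunE; case: pickP => // j /eqP Hj.
  by rewrite -Hj codom_f in Hk.
have Hxy2 : forall j, xy y (f j) = y j.
  move=> j; rewrite ffunE; case: pickP => [j' /eqP /finj -> //| /(_ j)].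
  by rewrite eqxx.
have -> : phi y = embed f phi (xy y).
  rewrite /embed; have -> : [forall k, (k \notin codom f) ==> (xy y k == ord0)].
    by apply/forallP => k; apply/implyP => Hk; rewrite Hxy1.
  by congr phi; apply/ffunP => j; rewrite ffunE Hxy2.
rewrite Hv; apply: eq_bigr => i _.
rewrite (bigID (fun k => k \in codom f)) /=.
rewrite [X in _ * (_ * X)](eq_bigr (fun k => v i k ord0)); last first.
  by move=> k Hk; rewrite Hxy1.
rewrite (eq_bigl (fun k => k \in [set f x | x in 'I_n])); last first.
  by move=> k; apply/codomP/imsetP => [[j ->]|[j _ ->]]; exists j.
rewrite big_imset /=; last by move=> j1 j2 _ _; apply: finj.
under eq_bigr do rewrite Hxy2.
by rewrite -mulrA [X in _ * X = _]mulrC.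
Qed.

Lemma sop_triv N (psi : qvec R N) : sum_of_products psi #|bits N|.
Proof.
exists (fun i => psi (enum_val i : bits N)), (fun i k b => ((enum_val i : bits N) k == b)%:R) => x.
rewrite (bigD1 (enum_rank x)) //= enum_rankK big1 ?mulr1.
  rewrite big1 ?addr0 // => i Hi.
  have ne : enum_val i != x by apply: contraNneq Hi => <-; rewrite enum_valK.
  have [k Hk] : exists k, enum_val i k != x k.
    apply/existsP; rewrite -negb_forall; apply: contra ne => /forallP H.
    by apply/eqP/ffunP => k; apply/eqP/H.
  by rewrite (bigD1 k) //= (negbTE Hk) mul0r mulr0.
by move=> k _; rewrite eqxx.
Qed.

Definition bellS m : {set bits (m + m)} :=
  [set x : bits (m + m) | [forall a : 'I_m, x (lshift m a) == x (rshift m a)]].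

Definition bellc m : C := sqrtC ((#|bellS m|%:R)^-1).

Definition bell m : qvec R (m + m) :=
  fun x => if x \in bellS m then bellc m else 0.
Arguments bell : clear implicits.

Lemma bellS_card m : (0 < #|bellS m|)%N.
Proof.
apply/card_gt0P; exists [ffun => ord0]; rewrite inE.
by apply/forallP => a; rewrite !ffunE.
Qed.

Lemma bellc_nz m : bellc m != 0.
Proof.
rewrite /bellc sqrtC_eq0 invr_eq0 pnatr_eq0 -lt0n; exact: bellS_card.
Qed.

Lemma bell_pure m : is_pure (bell m).
Proof.
rewrite /is_pure (bigID (fun x => x \in bellS m)) /= [X in _ + X]big1; last first.
  by move=> x /negbTE Hx; rewrite /bell Hx mul0r.
rewrite addr0.
under eq_bigr => x Hx do rewrite /bell Hx.
rewrite sumr_const geC0_conj; last by rewrite sqrtC_ge0 invr_ge0 ler0n.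
rewrite -expr2 /bellc sqrtCK -(mulr_natr ((#|bellS m|%:R)^-1 : C)) mulVf // pnatr_eq0 -lt0n.
exact: bellS_card.
Qed.

Lemma split_l m n (a : 'I_m) : fintype.split (lshift n a) = inl a.
Proof. exact: (unsplitK (inl _ a)). Qed.
Lemma split_r m n (a : 'I_n) : fintype.split (rshift m a) = inr a.
Proof. exact: (unsplitK (inr _ a)). Qed.

Lemma bell_rank m K : sum_of_products (bell m) K -> (2 ^ m <= K)%N.
Proof.
case=> a [v Hv].
pose p := #|bits m|.
pose xij (i j : 'I_p) : bits (m + m) := finfun (fun k =>
  match fintype.split k with inl b => enum_val i b | inr b => enum_val j b end).
have Hl i j b : xij i j (lshift m b) = enum_val i b by rewrite ffunE split_l.
have Hr i j b : xij i j (rshift m b) = enum_val j b by rewrite ffunE split_r.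
pose A : 'M[C]_p := \matrix_(i, j) bell m (xij i j).
have HA : A = bellc m *: 1%:M.
  apply/matrixP => i j; rewrite !mxE /bell inE.
  case: eqP => [<-|Hij].
    rewrite mulr1n mulr1; case: forallP => // H; exfalso; apply: H => b; by rewrite Hl Hr.
  rewrite mulr0n mulr0; case: forallP => // H; exfalso; apply: Hij.
  apply: enum_val_inj; apply/ffunP => b; apply/eqP; by rewrite -(Hl i j) -(Hr i j) H.
pose P : 'M[C]_(p, K) := \matrix_(i < p, l < K) (a l * \prod_(b < m) v l (lshift m b) ((enum_val i : bits m) b)).
pose Q : 'M[C]_(K, p) := \matrix_(l < K, j < p) \prod_(b < m) v l (rshift m b) ((enum_val j : bits m) b).
have HPQ : A = P *m Q.
  apply/matrixP => i j; rewrite !mxE Hv; apply: eq_bigr => l _.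
  rewrite !mxE big_split_ord /= -mulrA; congr (_ * (_ * _)).
    by apply: eq_bigr => b _; rewrite Hl.
  by apply: eq_bigr => b _; rewrite Hr.
have := mulmx_max_rank P Q; rewrite -HPQ HA mxrank_scale_nz ?bellc_nz // mxrank1.
by rewrite /p card_ffun !card_ord.
Qed.
End Helpers.

Theorem theorem8 (R : realType) (Psi : set (mqstate R)) :
  is_resource Psi -> universal Psi -> schmidt_measure_infinite Psi.
Proof.
move=> [_ Hpure] Huniv r.
pose m := (Num.truncn `|r|).+1.
have Hr : r < m%:R.
  by apply: (le_lt_trans (ler_norm r)); apply: truncnS_gt.
have [[N psi] [HPs [_ [f [finj Hl]]]]] := Huniv _ _ (bell_pure R m).
exists (existT _ N psi); split => //.
apply: (lt_le_trans Hr); rewrite /schmidt_measure; apply: lb_le_inf.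
  by exists (log2 (#|bits N|%:R : R)), #|bits N| => //; apply: sop_triv.
move=> y [K HK <-] /=.
have psinz : psi <> (fun _ => 0).
  move=> H0; have := Hpure _ HPs; rewrite /is_pure /= H0.
  rewrite big1 => [/eqP|x _]; last by rewrite mul0r.
  by rewrite eq_sym oner_eq0.
have HK2 := bell_rank (sop_embed finj (locc_sop Hl psinz HK)).
have l2 : (0 : R) < ln 2 by apply: ln_gt0; rewrite ltr1n.
have Kpos : (0 < K)%N by apply: leq_trans HK2; rewrite expn_gt0.
rewrite /log2 ler_pdivlMr // mulr_natl -lnXn ?ltr0n //.
rewrite ler_ln; last 2 first.
- by rewrite posrE exprn_gt0 // ltr0n.
- by rewrite posrE ltr0n.
by rewrite -natrX ler_nat.
Qed.
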